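(* Let $q\ge2$, let $(\varepsilon_t)_{t\in\mathbb Z}$ be i.i.d. with a continuous distribution, and $X_t=\sum_{l=0}^q\varepsilon_{t-l}$. For OPs of length $m=3$: (i) for every $2\le k\le q-1$ and all $i,j$, $p_{ij}(k)=p_ip_j$; (ii) $p_{ij}(k)=p_ip_j$ for $k\ge q+3$; (iii) the probabilities $p_{ij}(1)$, $p_{ij}(q)$, $p_{ij}(q+1)$, $p_{ij}(q+2)$ do not depend on $q$ (for fixed innovation distribution). Consequently, the long-run covariance matrix $\Sigma$ is the same for all $q\ge2$.
   Context: $\Pi_t$ is the OP of $(X_t,X_{t+1},X_{t+2})$, i.e. the permutation $\pi\in S_3$ with $\pi^{(j)}<\pi^{(k)}\iff X_{t+j-1}<X_{t+k-1}$; OPs in lexicographic order are $\pi_1=(1,2,3)$, $\pi_2=(1,3,2)$, $\pi_3=(2,1,3)$, $\pi_4=(2,3,1)$, $\pi_5=(3,1,2)$, $\pi_6=(3,2,1)$. $p_i=\mathbb P(\Pi_0=\pi_i)$, $p_{ij}(k)=\mathbb P(\Pi_0=\pi_i,\Pi_k=\pi_j)$, and $\Sigma=(\sigma_{ij})$ with $\sigma_{ij}=p_i(\delta_{ij}-p_j)+\sum_{k=1}^\infty(p_{ij}(k)+p_{ji}(k)-2p_ip_j)$. *)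

(* Defs.v *)
From HB Require Import structures.
From mathcomp Require Import all_boot all_order all_algebra.
From mathcomp Require Import all_classical all_reals all_analysis.
Set Implicit Arguments. Unset Strict Implicit. Unset Printing Implicit Defensive.
Import Order.TTheory GRing.Theory Num.Theory.
Local Open Scope classical_set_scope.
Local Open Scope ring_scope.

Section defs.
Context (d : measure_display) (T : measurableType d) (R : realType).

Definition iid_family (P : probability T R) (eps : int -> T -> R) : Prop :=
  [/\ (forall t, measurable_fun setT (eps t)),
      (forall (s : seq int) (B : int -> set R), uniq s ->
         (forall t, measurable (B t)) ->
         P (\bigcap_(t in [set` s]) (eps t @^-1` B t)) =
         (\prod_(t <- s) fine (P (eps t @^-1` B t)))%:E) &
      (forall t (B : set R), measurable B ->
         P (eps t @^-1` B) = P (eps 0 @^-1` B))].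

Definition continuous_distribution (P : probability T R) (Y : T -> R) : Prop :=
  forall x : R, P (Y @^-1` [set x]) = 0%E.

Definition MA (q : nat) (eps : int -> T -> R) (t : int) (w : T) : R :=
  \sum_(l < q.+1) eps (t - (l : nat)%:Z) w.

(* the six ordinal patterns of length 3 in lexicographic order:
   op_tab i = (pi^(1), pi^(2), pi^(3)) for pi_{i+1} *)
Definition op_tab (i : 'I_6) (j : 'I_3) : nat :=
  nth 0%N (nth [::] [:: [:: 1; 2; 3]; [:: 1; 3; 2]; [:: 2; 1; 3];
                        [:: 2; 3; 1]; [:: 3; 1; 2]; [:: 3; 2; 1]]%N i) j.

Definition op_event (X : int -> T -> R) (t : int) (i : 'I_6) : set T :=
  [set w | forall j k : 'I_3,
     (op_tab i j < op_tab i k)%N <-> X (t + (j : nat)%:Z) w < X (t + (k : nat)%:Z) w].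

Definition p_op (P : probability T R) (X : int -> T -> R) (i : 'I_6) : R :=
  fine (P (op_event X 0 i)).

Definition p2_op (P : probability T R) (X : int -> T -> R) (k : nat)
  (i j : 'I_6) : R :=
  fine (P (op_event X 0 i `&` op_event X (k%:Z) j)).

Definition Sigma_op (P : probability T R) (X : int -> T -> R) (i j : 'I_6) : R :=
  p_op P X i * ((i == j)%:R - p_op P X j) +
  limn (fun n : nat => \sum_(1 <= k < n)
     (p2_op P X k i j + p2_op P X k j i - 2 * p_op P X i * p_op P X j)).

End defs.

(* Main.v *)
Require Import Defs.
From HB Require Import structures.
From mathcomp Require Import all_boot all_order all_algebra.
From mathcomp Require Import all_classical all_reals all_analysis.
From mathcomp Require Import zify ring lra.
Import Order.TTheory GRing.Theory Num.Theory.
Local Open Scope classical_set_scope.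
Local Open Scope ring_scope.
Set Implicit Arguments. Unset Strict Implicit. Unset Printing Implicit Defensive.

Definition UU (R : realType) := nat -> R.
HB.instance Definition _ (R : realType) := gen_eqMixin (UU R).
HB.instance Definition _ (R : realType) := gen_choiceMixin (UU R).
HB.instance Definition _ (R : realType) := isPointed.Build (UU R) (fun _ => 0).

Section part1.
Context (d : measure_display) (T : measurableType d) (R : realType)
  (P : probability T R) (eps : int -> T -> R).
Hypothesis iid : iid_family P eps.

Definition vec (s : seq int) : T -> UU R := fun w i => eps (nth 0 s i) w.
Definition box (n : nat) (B : nat -> set R) : set (UU R) :=
  [set x | forall i, (i < n)%N -> B i (x i)].
Definition Gen (n : nat) : set (set (UU R)) :=
  [set X | exists B : nat -> set R, (forall i, measurable (B i)) /\ X = box n B].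

Lemma meps t (B : set R) : measurable B -> measurable (eps t @^-1` B).
Proof. by move=> mB; case: iid => m _ _; rewrite -(setTI (_ @^-1` _)); exact: m. Qed.

Lemma Gen_setI n : setI_closed (Gen n).
Proof.
move=> _ _ [B1 [m1 ->]] [B2 [m2 ->]]; exists (fun i => B1 i `&` B2 i); split.
  by move=> i; exact: measurableI.
by apply/seteqP; split => x /=; [move=> [h1 h2] i ni; split; [exact: h1|exact: h2]
  |move=> h; split => i ni; have [] := h i ni].
Qed.

Lemma Gen_setT n : Gen n setT.
Proof.
exists (fun _ => setT); split => //.
by apply/seteqP; split => x //= _ i.
Qed.

Lemma vec_box_meas s n B : (forall i, measurable (B i)) ->
  measurable (vec s @^-1` box n B).
Proof.
move=> mB.
have -> : vec s @^-1` box n B =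
   \bigcap_i (if (i < n)%N then eps (nth 0 s i) @^-1` B i else setT).
  apply/seteqP; split => w /=.
    by move=> h i _; case: ifPn => // ni; exact: h.
  by move=> h i ni; have := h i I; rewrite ni.
apply: bigcapT_measurable => i; case: ifPn => _ //; exact: meps.
Qed.

Lemma iid_prod (s : seq int) (C : int -> set R) : uniq s ->
  (forall t, measurable (C t)) ->
  P (\bigcap_(t in [set` s]) eps t @^-1` C t) =
  (\prod_(t <- s) fine (P (eps 0 @^-1` C t)))%:E.
Proof.
move=> us mC; case: iid => _ h2 h3; rewrite h2 //.
by congr (_%:E); apply: eq_bigr => t _; rewrite h3.
Qed.

Lemma vec_box s B : uniq s ->
  vec s @^-1` box (size s) B = \bigcap_(t in [set` s]) eps t @^-1` B (index t s).
Proof.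
move=> us; apply/seteqP; split => w /=.
  move=> h t ts; have := h (index t s); rewrite index_mem ts => /(_ isT).
  by rewrite /vec nth_index.
move=> h i ni; have := h (nth 0 s i) (mem_nth 0 ni).
by rewrite index_uniq.
Qed.

Lemma P_vec_box s B : uniq s -> (forall i, measurable (B i)) ->
  P (vec s @^-1` box (size s) B) =
  (\prod_(i < size s) fine (P (eps 0 @^-1` B i)))%:E.
Proof.
move=> us mB; rewrite vec_box // iid_prod //; congr (_%:E).
rewrite (big_nth 0) big_mkord; apply: eq_bigr => i _.
by rewrite index_uniq.
Qed.

End part1.


Section part2.
Context (d : measure_display) (T : measurableType d) (R : realType)
  (P : probability T R).

Lemma meas_pre (G : set (set (UU R))) (f : T -> UU R) :
  (forall X, G X -> measurable (f @^-1` X)) ->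
  forall X, <<s G >> X -> measurable (f @^-1` X).
Proof.
move=> hG.
have mf : measurable_fun setT (f : T -> g_sigma_algebraType G).
  have e : @measurable _ (g_sigma_algebraType G) = <<s G >> by [].
  have := @measurability _ _ T (g_sigma_algebraType G) setT f G e.
  apply.
  by move=> _ [X GX <-]; rewrite setTI; exact: hG.
move=> X sX; rewrite -(setTI (f @^-1` X)); exact: mf.
Qed.

Lemma preD (f : T -> UU R) (A B : set (UU R)) :
  f @^-1` (A `\` B) = f @^-1` A `\` f @^-1` B.
Proof. by []. Qed.

Lemma finP (A : set T) : measurable A -> P A \is a fin_num.
Proof. by move=> mA; apply: fin_num_measure. Qed.

Lemma lambda_ext (G : set (set (UU R))) (f g : T -> UU R) (K : set T) :
  setI_closed G -> G setT -> measurable K ->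
  (forall X, G X -> measurable (f @^-1` X)) ->
  (forall X, G X -> measurable (g @^-1` X)) ->
  (forall X, G X -> P (f @^-1` X `&` K) = (P (g @^-1` X) * P K)%E) ->
  forall X, <<s G >> X -> P (f @^-1` X `&` K) = (P (g @^-1` X) * P K)%E.
Proof.
move=> GI GT mK mf mg hG.
have mf' := meas_pre mf; have mg' := meas_pre mg.
pose H := [set X | <<s G >> X /\ P (f @^-1` X `&` K) = (P (g @^-1` X) * P K)%E].
suff : <<s G >> `<=` H by move=> sub X /sub [].
apply: lambda_system_subset => //.
- split => //.
  + split; first exact: sub_sigma_algebra.
    by rewrite !preimage_setT setTI probability_setT mul1e.
  + move=> A B BA [sA hA] [sB hB]; split.
      by apply: (@measurableD _ (g_sigma_algebraType G)).
    rewrite !preD.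
    have -> : (f @^-1` A `\` f @^-1` B) `&` K = (f @^-1` A `&` K) `\` (f @^-1` B `&` K).
      apply/seteqP; split => x /=; first by case=> -[fa nfb] kx; split => // -[].
      by case=> -[fa kx] h; split => //; split => // fb; apply: h.
    have mfA := mf' _ sA; have mfB := mf' _ sB.
    have mgA := mg' _ sA; have mgB := mg' _ sB.
    rewrite measureD; [|exact: measurableI|exact: measurableI|].
      2: by rewrite ltey_eq finP //; exact: measurableI.
    rewrite measureD //; [|by rewrite ltey_eq finP].
    have -> : f @^-1` A `&` K `&` (f @^-1` B `&` K) = f @^-1` B `&` K.
      apply/seteqP; split => x /=; first by case=> _ [].
      by case=> fx kx; split; split => //; exact: BA.
    have -> : g @^-1` A `&` g @^-1` B = g @^-1` B.
      apply/seteqP; split => x /=; first by case.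
      by move=> gx; split => //; exact: BA.
    rewrite muleBl; [|exact: finP|by rewrite fin_num_adde_defl // fin_numN finP].
    by rewrite -hA -hB.
  + move=> F ndF hF; split.
      by apply: (@bigcupT_measurable _ (g_sigma_algebraType G)) => i; case: (hF i).
    rewrite !preimage_bigcup setI_bigcupl.
    have c1 : (fun n => P (f @^-1` F n `&` K)) @ \oo --> P (\bigcup_n (f @^-1` F n `&` K)).
      apply: nondecreasing_cvg_mu.
      - by move=> i; apply: measurableI => //; apply: mf'; case: (hF i).
      - apply: bigcupT_measurable => i; apply: measurableI => //.
        by apply: mf'; case: (hF i).
      - move=> i j ij; apply/subsetPset => x /= [fx kx]; split => //.
        by have := ndF i j ij; move/subsetPset; apply.
    have c2 : (fun n => P (g @^-1` F n)) @ \oo --> P (\bigcup_n (g @^-1` F n)).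
      apply: nondecreasing_cvg_mu.
      - by move=> i; apply: mg'; case: (hF i).
      - by apply: bigcupT_measurable => i; apply: mg'; case: (hF i).
      - move=> i j ij; apply/subsetPset => x /=.
        by have := ndF i j ij; move/subsetPset; apply.
    have c3 := cvgeZr (finP mK) c2.
    have c4 : (fun n => P (f @^-1` F n `&` K)) @ \oo --> (P (\bigcup_n (g @^-1` F n)) * P K)%E.
      apply: cvg_trans c3; apply: near_eq_cvg; near=> n; rewrite /=.
      by case: (hF n) => _ ->.
    exact: (cvg_unique _ c1 c4).
- by move=> X GX; split; [exact: sub_sigma_algebra|exact: hG].
Unshelve. all: by end_near.
Qed.

End part2.


Section part3.
Context (d : measure_display) (T : measurableType d) (R : realType)
  (P : probability T R) (eps : int -> T -> R).
Hypothesis iid : iid_family P eps.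

Lemma Gen_meas s n X : Gen n X -> measurable (vec eps s @^-1` X).
Proof. by move=> [B [mB ->]]; exact: (vec_box_meas iid). Qed.

Lemma sGen_meas s n X : <<s Gen n >> X -> measurable (vec eps s @^-1` X).
Proof. by apply: meas_pre => Y; exact: Gen_meas. Qed.

Lemma relabel (u1 u2 : seq int) n : uniq u1 -> uniq u2 -> size u1 = n ->
  size u2 = n -> forall X, <<s Gen n >> X ->
  P (vec eps u1 @^-1` X) = P (vec eps u2 @^-1` X).
Proof.
move=> uu1 uu2 s1 s2 X sX.
have := @lambda_ext _ _ _ P (Gen n) (vec eps u1) (vec eps u2) setT (@Gen_setI _ n)
  (@Gen_setT _ n) measurableT (fun Y => @Gen_meas u1 n Y) (fun Y => @Gen_meas u2 n Y).
rewrite probability_setT.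
have h : forall Y, Gen n Y -> P (vec eps u1 @^-1` Y `&` setT) = (P (vec eps u2 @^-1` Y) * 1)%E.
  move=> _ [B [mB ->]]; rewrite setIT mule1.
  rewrite -{1}s1 -s2 !(P_vec_box iid) //; by rewrite s1 s2.
by move=> /(_ h X sX); rewrite setIT mule1.
Qed.

Lemma indep_box s1 s2 B1 B2 : uniq (s1 ++ s2) ->
  (forall i, measurable (B1 i)) -> (forall i, measurable (B2 i)) ->
  P (vec eps s1 @^-1` box (size s1) B1 `&` vec eps s2 @^-1` box (size s2) B2) =
  (P (vec eps s2 @^-1` box (size s2) B2) * P (vec eps s1 @^-1` box (size s1) B1))%E.
Proof.
move=> u12 mB1 mB2; have := u12; rewrite cat_uniq => /and3P[us1 hs us2].
rewrite !(vec_box eps) //.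
pose C t := if t \in s1 then B1 (index t s1) else B2 (index t s2).
have mC t : measurable (C t) by rewrite /C; case: ifP.
have e1 : \bigcap_(t in [set` s1]) eps t @^-1` B1 (index t s1) =
          \bigcap_(t in [set` s1]) eps t @^-1` C t.
  by apply: eq_bigcapr => t /= ts; rewrite /C ts.
have e2 : \bigcap_(t in [set` s2]) eps t @^-1` B2 (index t s2) =
          \bigcap_(t in [set` s2]) eps t @^-1` C t.
  apply: eq_bigcapr => t /= ts; rewrite /C ifF //.
  apply/negbTE; apply: contra hs => t1; apply/hasP; exists t => //.
have e3 : \bigcap_(t in [set` s1]) eps t @^-1` C t `&`
          \bigcap_(t in [set` s2]) eps t @^-1` C t =
          \bigcap_(t in [set` (s1 ++ s2)]) eps t @^-1` C t.
  apply/seteqP; split => w /=.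
    move=> [h1 h2] t ht; have : t \in s1 ++ s2 := ht.
    by rewrite mem_cat => /orP[/h1|/h2].
  move=> h; split => t ts; apply: h.
    by have : t \in s1 ++ s2 by rewrite mem_cat ts.
  by have : t \in s1 ++ s2 by rewrite mem_cat ts orbT.
rewrite e1 e2 e3 !(iid_prod iid) // big_cat /= -EFinM mulrC //.
Qed.

Lemma indep s1 s2 X1 X2 : uniq (s1 ++ s2) ->
  <<s Gen (size s1) >> X1 -> <<s Gen (size s2) >> X2 ->
  P (vec eps s1 @^-1` X1 `&` vec eps s2 @^-1` X2) =
  (P (vec eps s1 @^-1` X1) * P (vec eps s2 @^-1` X2))%E.
Proof.
move=> u12 sX1 sX2.
have st1 : forall B2, (forall i, measurable (B2 i)) ->
  P (vec eps s1 @^-1` X1 `&` vec eps s2 @^-1` box (size s2) B2) =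
  (P (vec eps s1 @^-1` X1) * P (vec eps s2 @^-1` box (size s2) B2))%E.
  move=> B2 mB2.
  apply: (@lambda_ext _ _ _ P (Gen (size s1))) => //.
  - exact: Gen_setI.
  - exact: Gen_setT.
  - exact: (vec_box_meas iid).
  - by move=> Y; exact: Gen_meas.
  - by move=> Y; exact: Gen_meas.
  - move=> _ [B1 [mB1 ->]]; rewrite indep_box // muleC //.
have mK : measurable (vec eps s1 @^-1` X1) by exact: (sGen_meas s1 sX1).
rewrite setIC muleC.
apply: (@lambda_ext _ _ _ P (Gen (size s2))) => //.
- exact: Gen_setI.
- exact: Gen_setT.
- by move=> Y; exact: Gen_meas.
- by move=> Y; exact: Gen_meas.
- by move=> _ [B2 [mB2 ->]]; rewrite setIC st1 // muleC.
Qed.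

End part3.


Section part4.
Context (d : measure_display) (T : measurableType d) (R : realType)
  (eps : int -> T -> R).

Definition Ylin (a b c e : nat) (x : UU R) (j : 'I_3) : R :=
  match nat_of_ord j with
  | 0 => 0 | 1 => x a - x c | _ => x a - x c + (x b - x e) end.

Definition Phi (i : 'I_6) (a b c e : nat) : set (UU R) :=
  [set x | forall j k : 'I_3,
     (op_tab i j < op_tab i k)%N <-> Ylin a b c e x j < Ylin a b c e x k].

Lemma MA_step q t w :
  MA q eps (t + 1) w = MA q eps t w + eps (t + 1) w - eps (t - q%:Z) w.
Proof.
rewrite /MA big_ord_recl [in RHS]big_ord_recr /= subr0.
have -> : \sum_(i < q) eps (t + 1 - (bump 0 i : nat)%:Z) w = \sum_(i < q) eps (t - i%:Z) w.
  apply: eq_bigr => l _; congr (eps _ w).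
  rewrite /bump /=; lia.
by rewrite [in RHS]addrAC addrK addrC.
Qed.

Lemma MA_Y q t s a b c e w :
  nth 0 s a = t + 1 -> nth 0 s b = t + 2 -> nth 0 s c = t - q%:Z ->
  nth 0 s e = t + 1 - q%:Z ->
  forall j : 'I_3, MA q eps (t + (j : nat)%:Z) w =
    MA q eps t w + Ylin a b c e (vec eps s w) j.
Proof.
move=> ha hb hc he [[|[|[|//]]] hj] /=; rewrite /Ylin /vec /=.
- by rewrite !addr0.
- by rewrite MA_step ha hc addrA.
- have -> : t + 2%:Z = t + 1 + 1 by rewrite -addrA.
  rewrite MA_step MA_step ha hb hc he.
  have -> : t + 1 + 1 = t + 2 by rewrite -addrA.
  ring.
Qed.

Lemma op_event_eq q t s a b c e i :
  nth 0 s a = t + 1 -> nth 0 s b = t + 2 -> nth 0 s c = t - q%:Z ->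
  nth 0 s e = t + 1 - q%:Z ->
  op_event (MA q eps) t i = vec eps s @^-1` Phi i a b c e.
Proof.
move=> ha hb hc he; apply/seteqP; split => w /= h j k; have := h j k;
  by rewrite !(MA_Y _ ha hb hc he) ltrD2l.
Qed.

End part4.


Section part5.
Context (R : realType) (n : nat).
Let V := g_sigma_algebraType (@Gen R n).

Lemma coord_meas a : (a < n)%N -> measurable_fun setT (fun x : V => x a).
Proof.
move=> an _ B mB; rewrite setTI; apply: sub_sigma_algebra.
exists (fun i => if i == a then B else setT); split.
  by move=> i; case: ifP.
apply/seteqP; split => x /=.
  by move=> h i _; case: ifP => // /eqP ->.
by move=> h; have := h a an; rewrite eqxx.
Qed.

Lemma Ylin_meas a b c e j : (a < n)%N -> (b < n)%N -> (c < n)%N -> (e < n)%N ->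
  measurable_fun setT (fun x : V => Ylin a b c e x j).
Proof.
move=> an bn cn en; rewrite /Ylin; case: j => [[|[|j]]] _ /=.
- exact: measurable_cst.
- by apply: measurable_realfun.measurable_funB; exact: coord_meas.
- apply: measurable_realfun.measurable_funD;
    by apply: measurable_realfun.measurable_funB; exact: coord_meas.
Qed.

Lemma Phi_meas i a b c e : (a < n)%N -> (b < n)%N -> (c < n)%N -> (e < n)%N ->
  <<s @Gen R n >> (Phi i a b c e).
Proof.
move=> an bn cn en.
pose L (j k : 'I_3) : set V := [set x | Ylin a b c e x j < Ylin a b c e x k].
have mL j k : measurable (L j k).
  have -> : L j k = setT `&` (fun x : V => Ylin a b c e x k - Ylin a b c e x j) @^-1`
      `]0, +oo[%classic.
    apply/seteqP; split => x /=; rewrite in_itv /= andbT subr_gt0 //.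
    by case.
  apply: measurable_realfun.measurable_funB; try exact: Ylin_meas.
    exact: measurableT.
  exact: measurable_itv.
pose S (j k : 'I_3) : set V :=
  if (op_tab i j < op_tab i k)%N then L j k else ~` L j k.
have -> : Phi i a b c e = \bigcap_(j in setT) \bigcap_(k in setT) S j k.
  apply/seteqP; split => x /=.
    move=> h j _ k _; rewrite /S; have := h j k.
    by case: ifP => _ [h1 h2]; [apply: h1|move=> /h2].
  move=> h j k; have := h j I k I; rewrite /S.
  by case: ifP => _ hh; split => // ?; exfalso; apply: hh.
change (measurable (\bigcap_(j in setT) \bigcap_(k in setT) S j k)).
apply: fin_bigcap_measurable; first exact: finite_finset.
move=> j _; apply: fin_bigcap_measurable; first exact: finite_finset.
by move=> k _; rewrite /S; case: ifP => _ //; exact: measurableC.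
Qed.

End part5.


Section part6.
Context (d : measure_display) (T : measurableType d) (R : realType)
  (P : probability T R) (eps : int -> T -> R).
Hypothesis iid : iid_family P eps.

Definition sq (q : nat) (t : int) : seq int :=
  [:: t + 1; t + 2; t - q%:Z; t + 1 - q%:Z].
Definition s0 : seq int := [:: 1; 2; 3; 4].
Definition Pi (i : 'I_6) : R := fine (P (vec eps s0 @^-1` Phi i 0 1 2 3)).

Lemma opq q t i : op_event (MA q eps) t i = vec eps (sq q t) @^-1` Phi i 0 1 2 3.
Proof. exact: op_event_eq. Qed.

Lemma uniq_sq q t : (0 < q)%N -> uniq (sq q t).
Proof. move=> q0; rewrite /sq /= !inE; lia. Qed.

Lemma PhiM i : <<s @Gen R 4 >> (Phi i 0 1 2 3).
Proof. exact: Phi_meas. Qed.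

Lemma P_sq q t i : (0 < q)%N -> P (vec eps (sq q t) @^-1` Phi i 0 1 2 3) =
  P (vec eps s0 @^-1` Phi i 0 1 2 3).
Proof. by move=> q0; apply: (relabel iid) => //; [exact: uniq_sq|exact: PhiM]. Qed.

Lemma p_opE q i : (0 < q)%N -> p_op P (MA q eps) i = Pi i.
Proof. by move=> q0; rewrite /p_op opq P_sq. Qed.

Lemma p2_indep q k i j : (0 < q)%N -> uniq (sq q 0 ++ sq q k%:Z) ->
  p2_op P (MA q eps) k i j = p_op P (MA q eps) i * p_op P (MA q eps) j.
Proof.
move=> q0 u; rewrite /p2_op !p_opE // !opq (indep iid) //; try exact: PhiM.
rewrite !P_sq // /Pi; apply: fineM; apply: finP; apply: (sGen_meas iid); exact: PhiM.
Qed.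

Lemma part_i q : (2 <= q)%N -> forall k : nat, (2 <= k <= q.-1)%N ->
  forall i j : 'I_6,
  p2_op P (MA q eps) k i j = p_op P (MA q eps) i * p_op P (MA q eps) j.
Proof. move=> q2 k /andP[k2 kq] i j; apply: p2_indep; first lia; rewrite /sq /= !inE; lia. Qed.

Lemma part_ii q : (2 <= q)%N -> forall k : nat, (q + 3 <= k)%N ->
  forall i j : 'I_6,
  p2_op P (MA q eps) k i j = p_op P (MA q eps) i * p_op P (MA q eps) j.
Proof. move=> q2 k kq i j; apply: p2_indep; first lia; rewrite /sq /= !inE; lia. Qed.

End part6.


Section part7.
Context (d : measure_display) (T : measurableType d) (R : realType)
  (P : probability T R) (eps : int -> T -> R).
Hypothesis iid : iid_family P eps.

Lemma p2E q (k : nat) u a b c e a' b' c' e' i j :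
  nth 0 u a = 0 + 1 -> nth 0 u b = 0 + 2 -> nth 0 u c = 0 - q%:Z ->
  nth 0 u e = 0 + 1 - q%:Z ->
  nth 0 u a' = k%:Z + 1 -> nth 0 u b' = k%:Z + 2 -> nth 0 u c' = k%:Z - q%:Z ->
  nth 0 u e' = k%:Z + 1 - q%:Z ->
  p2_op P (MA q eps) k i j =
  fine (P (vec eps u @^-1` (Phi i a b c e `&` Phi j a' b' c' e'))).
Proof.
move=> ha hb hc he ha' hb' hc' he'; rewrite /p2_op.
by rewrite (op_event_eq _ _ ha hb hc he) (op_event_eq _ _ ha' hb' hc' he').
Qed.

Lemma cmp n u u' i j a b c e a' b' c' e' :
  uniq u -> uniq u' -> size u = n -> size u' = n ->
  (a < n)%N -> (b < n)%N -> (c < n)%N -> (e < n)%N ->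
  (a' < n)%N -> (b' < n)%N -> (c' < n)%N -> (e' < n)%N ->
  fine (P (vec eps u @^-1` (Phi i a b c e `&` Phi j a' b' c' e'))) =
  fine (P (vec eps u' @^-1` (Phi i a b c e `&` Phi j a' b' c' e'))).
Proof.
move=> uu uu' su su' ha hb hc he ha' hb' hc' he'; congr fine.
apply: (relabel iid uu uu' su su').
apply: (@measurableI _ (g_sigma_algebraType (@Gen R n))); exact: Phi_meas.
Qed.

Definition u1 (q : nat) : seq int := [:: 1; 2; 3; - q%:Z; 1 - q%:Z; 2 - q%:Z].
Definition u2 (q : nat) : seq int := [:: 1; 2; - q%:Z; 1 - q%:Z; q%:Z + 1; q%:Z + 2; 0].
Definition u3 (q : nat) : seq int := [:: 1; 2; - q%:Z; 1 - q%:Z; q%:Z + 2; q%:Z + 3].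
Definition u4 (q : nat) : seq int := [:: 1; 2; - q%:Z; 1 - q%:Z; q%:Z + 3; q%:Z + 4; 3].

Lemma case1 q q' i j : (2 <= q)%N -> (2 <= q')%N ->
  p2_op P (MA q eps) 1 i j = p2_op P (MA q' eps) 1 i j.
Proof.
move=> hq hq'.
rewrite (@p2E q 1 (u1 q) 0 1 3 4 1 2 4 5) /=; try lia.
rewrite (@p2E q' 1 (u1 q') 0 1 3 4 1 2 4 5) /=; try lia.
apply: cmp => //; rewrite /u1 /= !inE; lia.
Qed.

Lemma case2 q q' i j : (2 <= q)%N -> (2 <= q')%N ->
  p2_op P (MA q eps) q i j = p2_op P (MA q' eps) q' i j.
Proof.
move=> hq hq'.
rewrite (@p2E q q (u2 q) 0 1 2 3 4 5 6 0) /=; try lia.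
rewrite (@p2E q' q' (u2 q') 0 1 2 3 4 5 6 0) /=; try lia.
apply: cmp => //; rewrite /u2 /= !inE; lia.
Qed.

Lemma case3 q q' i j : (2 <= q)%N -> (2 <= q')%N ->
  p2_op P (MA q eps) q.+1 i j = p2_op P (MA q' eps) q'.+1 i j.
Proof.
move=> hq hq'.
rewrite (@p2E q q.+1 (u3 q) 0 1 2 3 4 5 0 1) /=; try lia.
rewrite (@p2E q' q'.+1 (u3 q') 0 1 2 3 4 5 0 1) /=; try lia.
apply: cmp => //; rewrite /u3 /= !inE; lia.
Qed.

Lemma case4 q q' i j : (2 <= q)%N -> (2 <= q')%N ->
  p2_op P (MA q eps) q.+2 i j = p2_op P (MA q' eps) q'.+2 i j.
Proof.
move=> hq hq'.
rewrite (@p2E q q.+2 (u4 q) 0 1 2 3 4 5 1 6) /=; try lia.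
rewrite (@p2E q' q'.+2 (u4 q') 0 1 2 3 4 5 1 6) /=; try lia.
apply: cmp => //; rewrite /u4 /= !inE; lia.
Qed.

End part7.


Lemma sum_sparse (R : realType) (f : nat -> R) q : (2 <= q)%N ->
  (forall k, (2 <= k <= q.-1)%N -> f k = 0) ->
  (forall k, (q + 3 <= k)%N -> f k = 0) ->
  forall n, (q + 3 <= n)%N ->
  \sum_(1 <= k < n) f k = f 1%N + f q + f q.+1 + f q.+2.
Proof.
move=> q2 h1 h2 n; rewrite leq_eqVlt => /orP[/eqP <-|].
  rewrite !addnS addn0 !big_nat_recr //=; try lia.
  rewrite big_ltn; last lia.
  rewrite big_nat_cond big1 ?addr0 // => k /andP[/andP[k2 kq] _].
  apply: h1; lia.
elim: n => [//|n IH] hn.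
rewrite big_nat_recr /=; last lia.
rewrite h2 ?addr0; last lia.
move: hn; rewrite ltnS leq_eqVlt => /orP[/eqP <-|/IH //].
rewrite !addnS addn0 !big_nat_recr //=; try lia.
rewrite big_ltn; last lia.
rewrite big_nat_cond big1 ?addr0 // => k /andP[/andP[k2 kq] _].
apply: h1; lia.
Qed.

Lemma limn_sparse (R : realType) (f : nat -> R) q : (2 <= q)%N ->
  (forall k, (2 <= k <= q.-1)%N -> f k = 0) ->
  (forall k, (q + 3 <= k)%N -> f k = 0) ->
  limn (fun n => \sum_(1 <= k < n) f k) = f 1%N + f q + f q.+1 + f q.+2.
Proof.
move=> q2 h1 h2; apply: cvg_lim => //; apply: cvg_near_cst.
near=> n; apply: sum_sparse => //.
near: n; exists (q + 3)%N => // n /=.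
Unshelve. all: by end_near.
Qed.


Unset Implicit Arguments.

Theorem mainTheorem15 (d : measure_display) (T : measurableType d)
  (R : realType) (P : probability T R) (eps : int -> T -> R) :
  iid_family P eps -> continuous_distribution P (eps 0) ->
  [/\ (* (i) *)
      (forall q : nat, (2 <= q)%N -> forall k : nat, (2 <= k <= q.-1)%N ->
         forall i j : 'I_6,
         p2_op P (MA q eps) k i j = p_op P (MA q eps) i * p_op P (MA q eps) j),
      (* (ii) *)
      (forall q : nat, (2 <= q)%N -> forall k : nat, (q + 3 <= k)%N ->
         forall i j : 'I_6,
         p2_op P (MA q eps) k i j = p_op P (MA q eps) i * p_op P (MA q eps) j),
      (* (iii) *)
      (forall q q' : nat, (2 <= q)%N -> (2 <= q')%N -> forall i j : 'I_6,
         [/\ p2_op P (MA q eps) 1 i j = p2_op P (MA q' eps) 1 i j,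
             p2_op P (MA q eps) q i j = p2_op P (MA q' eps) q' i j,
             p2_op P (MA q eps) q.+1 i j = p2_op P (MA q' eps) q'.+1 i j &
             p2_op P (MA q eps) q.+2 i j = p2_op P (MA q' eps) q'.+2 i j]) &
      (* consequence: Sigma is the same for all q >= 2 *)
      (forall q q' : nat, (2 <= q)%N -> (2 <= q')%N -> forall i j : 'I_6,
         Sigma_op P (MA q eps) i j = Sigma_op P (MA q' eps) i j)].
Proof.
move=> iid _.
have hi := part_i iid; have hii := part_ii iid.
split => //.
  move=> q q' hq hq' i j; split.
  - exact: case1.
  - exact: case2.
  - exact: case3.
  - exact: case4.
have SE : forall q i j, (2 <= q)%N -> Sigma_op P (MA q eps) i j =
   Pi P eps i * ((i == j)%:R - Pi P eps j) +
   ((p2_op P (MA q eps) 1 i j + p2_op P (MA q eps) 1 j i - 2 * Pi P eps i * Pi P eps j) +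
    (p2_op P (MA q eps) q i j + p2_op P (MA q eps) q j i - 2 * Pi P eps i * Pi P eps j) +
    (p2_op P (MA q eps) q.+1 i j + p2_op P (MA q eps) q.+1 j i - 2 * Pi P eps i * Pi P eps j) +
    (p2_op P (MA q eps) q.+2 i j + p2_op P (MA q eps) q.+2 j i - 2 * Pi P eps i * Pi P eps j)).
  move=> q i j hq; rewrite /Sigma_op !(p_opE iid) //; try lia.
  congr (_ + _).
  apply: (limn_sparse (f := fun k => p2_op P (MA q eps) k i j + p2_op P (MA q eps) k j i -
     2 * Pi P eps i * Pi P eps j)) => // k hk.
    rewrite !hi // !(p_opE iid) //; try lia; ring.
  rewrite !hii // !(p_opE iid) //; try lia; ring.
move=> q q' hq hq' i j; rewrite !SE //.
rewrite (case1 iid (q:=q) (q':=q') i j hq hq') (case1 iid (q:=q) (q':=q') j i hq hq').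
rewrite (case2 iid (q:=q) (q':=q') i j hq hq') (case2 iid (q:=q) (q':=q') j i hq hq').
rewrite (case3 iid (q:=q) (q':=q') i j hq hq') (case3 iid (q:=q) (q':=q') j i hq hq').
by rewrite (case4 iid (q:=q) (q':=q') i j hq hq') (case4 iid (q:=q) (q':=q') j i hq hq').
Qed.
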